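(* Let $W$ be the affine Weyl group of type $C_n^{(1)}$ and let $w=t_q\overline w\in W$. Then $\mathcal{L}_{\Lambda_0}(\sigma_nw)=\mathcal{L}_{\Lambda_0}(w)$.
   Context: Affine Kac–Moody setting of type $C_n^{(1)}$ ($n\ge2$): $\mathfrak h^*$ contains simple roots $\alpha_0,\dots,\alpha_n$, marks $(a_0,\dots,a_n)=(1,2,\dots,2,1)$, $(a_0^\vee,\dots,a_n^\vee)=(1,\dots,1)$, null root $\delta=\sum a_i\alpha_i$, canonical central element $c=\sum a_i^\vee\alpha_i^\vee$, Coxeter number $h=2n$, affine fundamental weight $\Lambda_0$, and $\rho^\vee\in\mathfrak h$ with $\langle\alpha_i,\rho^\vee\rangle=1$ for all $i$. The finite part $V_0=\mathbb{R}^n$ with standard dot product, $\alpha_i=\frac1{\sqrt2}(\varepsilon_i-\varepsilon_{i+1})$ ($1\le i\le n-1$), $\alpha_n=\sqrt2\varepsilon_n$. For $x\in V_0$, $t_x(v)=v+\langle v,c\rangle x-((v|x)+\frac12|x|^2\langle v,c\rangle)\delta$. $W_0=\langle s_1,\dots,s_n\rangle$, $M=\sqrt2\mathbb{Z}\varepsilon_1\oplus\dots\oplus\sqrt2\mathbb{Z}\varepsilon_n$, $W=T(M)\rtimes W_0$, each $w\in W$ written uniquely $w=t_q\overline w$. $\omega_n=\frac{\sqrt2}{2}(\varepsilon_1+\dots+\varepsilon_n)$, and $\sigma_n=t_{\omega_n}w_{0,n}w_0$, where $w_0$ is the longest element of $W_0$ and $w_{0,n}$ the longest element of $\langle s_1,\dots,s_{n-1}\rangle$.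 $\mathcal{L}_{\Lambda_0}(g)=\langle\Lambda_0-g\Lambda_0,\rho^\vee\rangle$ for $g\in GL(\mathfrak h^* )$. *)

(* Defs.v *)
From HB Require Import structures.
From mathcomp Require Import all_boot all_order all_algebra.
From mathcomp Require Import reals.
Set Implicit Arguments. Unset Strict Implicit. Unset Printing Implicit Defensive.
Import Order.TTheory GRing.Theory Num.Theory.
Local Open Scope ring_scope.

Section AffineC.
Variables (R : realType) (n : nat).

Definition V0 := 'rV[R]_n.
Definition dot (u v : V0) : R := \sum_(j < n) u 0 j * v 0 j.
Definition eps (k : nat) : V0 := \row_(j < n) ((j == k :> nat)%:R).
Definition sqrt2 : R := Num.sqrt 2.

(* Finite simple roots alpha_1..alpha_n, indexed 0-based by k = i-1:
   alpha_i = (eps_i - eps_(i+1))/sqrt2 for i<n, alpha_n = sqrt2 eps_n. *)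
Definition alphaf (k : nat) : V0 :=
  if (k.+1 < n)%N then sqrt2^-1 *: (eps k - eps k.+1) else sqrt2 *: eps k.
Definition markf (k : nat) : R := if (k.+1 < n)%N then 2 else 1.

(* h^* = V_0 (+) R delta (+) R Lambda_0 ; an element (x,a,b) is x + a delta + b Lambda_0. *)
Definition hstar := (V0 * R * R)%type.
Definition hfin (v : hstar) : V0 := v.1.1.
Definition hdel (v : hstar) : R := v.1.2.
Definition hlev (v : hstar) : R := v.2.   (* = <v, c> *)
Definition delta : hstar := (0, 1, 0).
Definition Lambda0 : hstar := (0, 0, 1).
Definition hsub (u v : hstar) : hstar :=
  (hfin u - hfin v, hdel u - hdel v, hlev u - hlev v).

(* Affine simple roots alpha_0..alpha_n (index i : 'I_n.+1);
   alpha_0 = delta - sum_(i>=1) a_i alpha_i, since delta = sum_i a_i alpha_i, a_0 = 1. *)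
Definition alpha (i : 'I_n.+1) : hstar :=
  if (i : nat) is k.+1 then (alphaf k, 0, 0)
  else (- \sum_(k < n) markf k *: alphaf k, 1, 0).

(* Elements of h: rho = (r,s,t) pairs with (x,a,b) as (x|r) + a s + b t
   (h is the dual space of h-star). *)
Definition hdual := (V0 * R * R)%type.
Definition hpair (v : hstar) (rho : hdual) : R :=
  dot (hfin v) rho.1.1 + hdel v * rho.1.2 + hlev v * rho.2.

Definition transl (x : V0) (v : hstar) : hstar :=
  (hfin v + hlev v *: x,
   hdel v - (dot (hfin v) x + 2^-1 * dot x x * hlev v),
   hlev v).

Definition sref (k : nat) : 'M[R]_n :=
  1%:M - (2 / dot (alphaf k) (alphaf k)) *: ((alphaf k)^T *m alphaf k).
Inductive inW0 : 'M[R]_n -> Prop :=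
  | inW0_1 : inW0 1%:M
  | inW0_s (k : 'I_n) (A : 'M[R]_n) : inW0 A -> inW0 (sref k *m A).
Definition actW0 (A : 'M[R]_n) (v : hstar) : hstar :=
  (hfin v *m A, hdel v, hlev v).

Definition inM (q : V0) : Prop := forall j : 'I_n, exists z : int, q 0 j = sqrt2 * z%:~R.

(* w_0 (longest element of W_0 = hyperoctahedral group) is -1;
   w_{0,n} (longest element of <s_1..s_(n-1)> = S_n) reverses coordinates. *)
Definition w0 : 'M[R]_n := - 1%:M.
Definition w0n : 'M[R]_n := \matrix_(i < n, j < n) ((i : nat) + j == n.-1)%:R.

Definition omega_n : V0 := (sqrt2 / 2) *: \row_(j < n) 1.

Definition sigma_n (v : hstar) : hstar :=
  transl omega_n (actW0 w0n (actW0 w0 v)).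

Definition LL (rho : hdual) (g : hstar -> hstar) : R :=
  hpair (hsub Lambda0 (g Lambda0)) rho.

End AffineC.

(* Main.v *)
Require Import Defs.
From HB Require Import structures.
From mathcomp Require Import all_boot all_order all_algebra.
From mathcomp Require Import reals zify ring lra.
Import Order.TTheory GRing.Theory Num.Theory.
Local Open Scope ring_scope.
Section L.
Variables (R : realType) (n : nat).
Implicit Types u v : V0 R n.
Lemma dotDl u1 u2 v : dot (u1 + u2) v = dot u1 v + dot u2 v.
Proof. by rewrite /dot -big_split; apply: eq_bigr => j _; rewrite !mxE mulrDl. Qed.
Lemma dotNl u v : dot (- u) v = - dot u v.
Proof. by rewrite /dot -sumrN; apply: eq_bigr => j _; rewrite !mxE mulNr. Qed.
Lemma dotZl a u v : dot (a *: u) v = a * dot u v.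
Proof. by rewrite /dot mulr_sumr; apply: eq_bigr => j _; rewrite !mxE mulrA. Qed.
Lemma dot0l v : dot 0 v = 0.
Proof. by rewrite /dot big1 // => j _; rewrite mxE mul0r. Qed.
Lemma dotC u v : dot u v = dot v u.
Proof. by rewrite /dot; apply: eq_bigr => j _; rewrite mulrC. Qed.
Lemma dot_sum (I : finType) (F : I -> V0 R n) v : dot (\sum_i F i) v = \sum_i dot (F i) v.
Proof.
rewrite /dot exchange_big /=; apply: eq_bigr => j _.
by rewrite summxE mulr_suml.
Qed.
Lemma dot_eps k (hk : (k < n)%N) v : dot (eps R n k) v = v 0 (Ordinal hk).
Proof.
rewrite /dot (bigD1 (Ordinal hk)) //= mxE eqxx mul1r big1 ?addr0 // => j hj.
rewrite mxE; case: eqP => [e|]; last by rewrite mul0r.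
by case/eqP: hj; apply: val_inj.
Qed.
Lemma w0n_rev u (j : 'I_n) : (u *m w0n R n) 0 j = u 0 (rev_ord j).
Proof.
rewrite mxE (bigD1 (rev_ord j)) //= mxE /= big1 ?addr0.
  rewrite (_ : (n - j.+1 + j == n.-1)%N = true) ?mulr1 //; apply/eqP; case: j => j hj /=; lia.
move=> i hi; rewrite mxE; case: eqP => [e|]; last by rewrite mulr0.
case/eqP: hi; apply: val_inj => /=; case: j e => j hj /= e; lia.
Qed.
Lemma dot_w0n u v : dot (u *m w0n R n) v = \sum_(i < n) u 0 i * v 0 (rev_ord i).
Proof.
rewrite /dot (reindex_inj rev_ord_inj) /=; apply: eq_bigr => i _.
by rewrite w0n_rev rev_ordK.
Qed.
End L.
Arguments dot_eps {R n k}.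
Lemma sum_markf (R : realType) n : (0 < n)%N -> \sum_(k < n) markf R n k = (2 * n - 1)%:R.
Proof.
case: n => // m _; rewrite big_ord_recr /= /markf ltnn.
rewrite (eq_bigr (fun _ => 2)) => [|k _]; last by rewrite ltnS ltn_ord.
rewrite sumr_const card_ord (_ : (2 * m.+1 - 1 = 2 * m + 1)%N); last lia.
by rewrite natrD natrM mulr_natr.
Qed.
Theorem theorem4p11 (R : realType) (n : nat) (hn : (2 <= n)%N)
  (rho : hdual R n)
  (hrho : forall i : 'I_n.+1, hpair (@alpha R n i) rho = 1)
  (q : V0 R n) (hq : inM q) (wbar : 'M[R]_n) (hw : inW0 wbar) :
  let w := fun v : hstar R n => transl q (actW0 wbar v) in
  LL rho (fun v => sigma_n (w v)) = LL rho w.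
Proof.
move=> w.
case: rho hrho => [[r s] t] hrho.
have sq2 : sqrt2 R * sqrt2 R = 2 by rewrite /sqrt2 -expr2 sqr_sqrtr // ler0n.
have s2n0 : sqrt2 R != 0 by rewrite /sqrt2 sqrtr_eq0 -ltNge ltr0n.
have ha : forall k : 'I_n, dot (alphaf R n k) r = 1.
  move=> k; have := hrho (Ordinal (ltn_ord k : (k.+1 < n.+1)%N)).
  by rewrite /hpair /alpha /= mul0r mul0r !addr0.
have hr : forall d (i : 'I_n), (n - 1 - i)%N = d -> r 0 i * sqrt2 R = (2 * d + 1)%:R.
  elim=> [|d IH] i hi.
    have := ha i; rewrite /alphaf ifN; last by lia.
    rewrite dotZl (dot_eps (ltn_ord i)) (_ : Ordinal _ = i); last exact: val_inj.
    by rewrite mulrC => ->.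
  have hk1 : (i.+1 < n)%N by lia.
  have := ha i; rewrite /alphaf ifT; last by lia.
  rewrite dotZl dotDl dotNl (dot_eps (ltn_ord i)) (dot_eps hk1) (_ : Ordinal _ = i); last exact: val_inj.
  move=> H.
  have e : r 0 i - r 0 (Ordinal hk1) = sqrt2 R.
    by rewrite -[sqrt2 R]mulr1 -H mulrA divff // mul1r.
  have -> : r 0 i = (r 0 i - r 0 (Ordinal hk1)) + r 0 (Ordinal hk1) by rewrite subrK.
  rewrite e mulrDl (IH (Ordinal hk1)) /=; last by lia.
  rewrite sq2 -natrD; congr _%:R; lia.
have P : forall i : 'I_n, r 0 i + r 0 (rev_ord i) = sqrt2 R * n%:R.
  move=> i; apply: (mulIf s2n0).
  rewrite mulrDl (hr _ i erefl) (hr _ (rev_ord i) erefl) -mulrA (mulrC n%:R) mulrA sq2.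
  rewrite -natrD -natrM; congr _%:R => /=; case: i => i hi /=; lia.
have hs : s = 2 * n%:R.
  have := hrho ord0; rewrite /hpair /alpha /= mul0r addr0 mul1r dotNl dot_sum.
  under eq_bigr => k _ do rewrite dotZl ha mulr1.
  rewrite sum_markf; last by lia.
  move/eqP; rewrite addrC subr_eq => /eqP ->.
  rewrite natrB; last lia.
  by rewrite natrM addrC subrK.

rewrite /LL /w /sigma_n /transl /actW0 /hsub /hpair /Lambda0 /hfin /hdel /hlev /=.
rewrite mul0mx add0r scale1r !sub0r /w0 mulmxN mulmx1 mulNmx add0r scale1r !dotNl !dotDl !dotNl !dot0l.
set S := \sum_(i < n) q 0 i.
set om := omega_n R n.
have omE : forall i, om 0 i = sqrt2 R / 2 by move=> i; rewrite !mxE mulr1.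
have F1 : dot (q *m w0n R n) r + dot q r = S * (sqrt2 R * n%:R).
  rewrite dot_w0n /dot -big_split mulr_suml; apply: eq_bigr => i _.
  rewrite -[X in X = _]/(q 0 i * r 0 (rev_ord i) + q 0 i * r 0 i).
  by rewrite -mulrDr addrC P.
have F2 : dot (q *m w0n R n) om = S * (sqrt2 R / 2).
  rewrite dot_w0n mulr_suml; apply: eq_bigr => i _; by rewrite omE.
have F3 : dot om r + dot om r = n%:R * (sqrt2 R / 2 * (sqrt2 R * n%:R)).
  have e : dot om r = \sum_i om 0 (rev_ord i) * r 0 (rev_ord i).
    by rewrite /dot (reindex_inj rev_ord_inj).
  rewrite {2}e /dot -big_split /= (eq_bigr (fun _ => sqrt2 R / 2 * (sqrt2 R * n%:R))).
    by rewrite sumr_const card_ord mulr_natl.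
  move=> i _; rewrite -[X in X = _]/(om 0 i * r 0 i + om 0 (rev_ord i) * r 0 (rev_ord i)).
  by rewrite !omE -mulrDr P.
have F4 : dot om om = n%:R * (sqrt2 R / 2 * (sqrt2 R / 2)).
  rewrite /dot (eq_bigr (fun _ => sqrt2 R / 2 * (sqrt2 R / 2))).
    by rewrite sumr_const card_ord mulr_natl.
  by move=> i _; rewrite !omE.
rewrite F2 F4 hs.
have -> : dot (q *m w0n R n) r = S * (sqrt2 R * n%:R) - dot q r by rewrite -F1 addrK.
have -> : dot om r = (n%:R * (sqrt2 R / 2 * (sqrt2 R * n%:R))) / 2 by rewrite -F3; field.
by field.
Qed.
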